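(* Let $S$ be a string of length $n$ and let $P\subseteq[n]$ be a $(\tau,\delta)$-partitioning set of $S$ for parameters $1\le\tau\le\delta\le n$. Let $i,j\in[n]$ and let $\ell=\mathrm{LCE}(i,j)$. If $\ell>2\delta$ then $$\{p-i\mid p\in P\cap[i+\delta..i+\ell-\delta-1]\}=\{p-j\mid p\in P\cap[j+\delta..j+\ell-\delta-1]\}.$$
   Context: $[a..b]=\{a,a+1,\dots,b\}$. $\mathrm{LCE}(i,j)=\min\{k\ge0\mid S[i+k]\ne S[j+k]\}$. A prefix of length $y\ge1$ of a string $W$ is a period of $W$ if $W[x]=W[x+y]$ for all $1\le x\le |W|-y$; $\rho_W$ denotes the length of the shortest period, and $W$ is periodic if $\rho_W\le |W|/2$. A set $P\subseteq[n]$ is a $(\tau,\delta)$-partitioning set of $S$ if (1) (local consistency) for any $i,j\in[1+\delta..n-\delta]$ with $S[i-\delta..i+\delta]=S[j-\delta..j+\delta]$ we have $i\in P\Leftrightarrow j\in P$; and (2) (compactness) for any two consecutive elements $p_i<p_{i+1}$ of $P\cup\{1,n+1\}$, either $p_{i+1}-p_i\le\tau$, or $p_{i+1}-p_i>\tau$ and $u=S[p_i..p_{i+1}-1]$ is periodic with $\rho_u\le\tau$. *)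

(* Defs.v *)
(* Strings are 1-indexed: S[x] for 1 <= x <= size S. *)
From mathcomp Require Import all_boot.
Set Implicit Arguments. Unset Strict Implicit. Unset Printing Implicit Defensive.

Section Strings.
Variable T : eqType.

Definition chr (S : seq T) (x : nat) : option T :=
  if (1 <= x <= size S) then nth None (map Some S) x.-1 else None.

Definition substr (S : seq T) (a b : nat) : seq T :=
  take (b.+1 - a) (drop a.-1 S).

(* LCE(i,j) = min { k >= 0 | S[i+k] <> S[j+k] }, where a position outside
   [1..n] never matches (the usual end-of-string convention). *)
Definition lce_mismatch (S : seq T) (i j k : nat) : bool :=
  (size S < i + k) || (size S < j + k) || (chr S (i + k) != chr S (j + k)).

Definition LCE (S : seq T) (i j : nat) : nat :=
  find (lce_mismatch S i j) (iota 0 (size S).+1).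

Definition is_period (W : seq T) (y : nat) : bool :=
  (1 <= y) && all (fun x => chr W x == chr W (x + y)) (iota 1 (size W - y)).

(* rho_W: length of the shortest period (|W| is always a period of nonempty W) *)
Definition rho (W : seq T) : nat :=
  (find (is_period W) (iota 1 (size W))).+1.

Definition periodic (W : seq T) : bool := rho W <= (size W) %/ 2.

Definition partitioning_set (S : seq T) (tau delta : nat) (P : pred nat) : Prop :=
  let n := size S in
  (forall p, P p -> 1 <= p <= n) /\
  (forall i j, 1 + delta <= i <= n - delta -> 1 + delta <= j <= n - delta ->
     substr S (i - delta) (i + delta) = substr S (j - delta) (j + delta) ->
     (P i <-> P j)) /\
  (let Q := fun x => P x || (x == 1) || (x == n.+1) in
   forall a b, Q a -> Q b -> a < b -> (forall c, a < c < b -> ~~ Q c) ->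
     b - a <= tau \/
     (tau < b - a /\ periodic (substr S a b.-1) /\ rho (substr S a b.-1) <= tau)).

End Strings.

(* Main.v *)
Require Import Defs.
From mathcomp Require Import all_boot.
From mathcomp Require Import zify.

Section Aux.
Variable T : eqType.

Lemma lce_prop (S : seq T) (x0 : T) i j k : 1 <= i -> 1 <= j ->
  k < LCE S i j ->
  [/\ i + k <= size S, j + k <= size S &
      nth x0 S (i - 1 + k) = nth x0 S (j - 1 + k)].
Proof.
move=> hi hj hk.
have hL : LCE S i j <= (size S).+1.
  by have := find_size (lce_mismatch S i j) (iota 0 (size S).+1); rewrite size_iota.
have := before_find 0 hk; rewrite nth_iota; last by apply: leq_trans hk hL.
rewrite add0n => /negbT; rewrite /lce_mismatch !negb_or -!leqNgt => /andP[/andP[h1 h2] /negPn/eqP h3].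
split=> //.
move: h3; rewrite /chr.
have -> : (1 <= i + k <= size S) by apply/andP; split=> //; lia.
have -> : (1 <= j + k <= size S) by apply/andP; split=> //; lia.
rewrite (nth_map x0); last by lia.
rewrite (nth_map x0); last by lia.
case=> e.
have -> : i - 1 + k = (i + k).-1 by lia.
by have -> : j - 1 + k = (j + k).-1 by lia.
Qed.

Lemma dir (S : seq T) (P : pred nat) (tau delta i j L : nat) (x0 : T) :
  partitioning_set S tau delta P ->
  1 <= i -> 1 <= j ->
  (forall k, k < L -> [/\ i + k <= size S, j + k <= size S &
      nth x0 S (i - 1 + k) = nth x0 S (j - 1 + k)]) ->
  2 * delta < L ->
  forall d : nat,
    (exists p, [/\ P p, i + delta <= p <= i + L - delta - 1 & d = p - i]) ->
    (exists p, [/\ P p, j + delta <= p <= j + L - delta - 1 & d = p - j]).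
Proof.
move=> [_ [HC _]] hi hj HL hdL d [p [Pp /andP[hp1 hp2] ->]].
exists (j + (p - i)); split; last by lia.
- have [a1 _ _] := HL (p + delta - i) ltac:(lia).
  have [_ b1 _] := HL (p + delta - i) ltac:(lia).
  apply/(HC p (j + (p - i))) => //.
  + apply/andP; split; lia.
  + apply/andP; split; lia.
  rewrite /substr.
  have -> : (p + delta).+1 - (p - delta) = (2 * delta).+1 by lia.
  have -> : (j + (p - i) + delta).+1 - (j + (p - i) - delta) = (2 * delta).+1 by lia.
  apply: (eq_from_nth (x0 := x0)).
    by rewrite !size_takel // size_drop; lia.
  move=> t; rewrite size_takel; last by rewrite size_drop; lia.
  move=> ht.
  rewrite !nth_take // !nth_drop.
  have [_ _ e] := HL (p - delta - i + t) ltac:(lia).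
  have -> : (p - delta).-1 + t = i - 1 + (p - delta - i + t) by lia.
  by have -> : (j + (p - i) - delta).-1 + t = j - 1 + (p - delta - i + t) by lia.
- apply/andP; split; lia.
Qed.
End Aux.

Theorem lemma7 (T : eqType) (S : seq T) (P : pred nat) (tau delta i j : nat) :
  1 <= tau -> tau <= delta -> delta <= size S ->
  partitioning_set S tau delta P ->
  1 <= i <= size S -> 1 <= j <= size S ->
  2 * delta < LCE S i j ->
  forall d : nat,
    (exists p, [/\ P p, i + delta <= p <= i + LCE S i j - delta - 1 & d = p - i]) <->
    (exists p, [/\ P p, j + delta <= p <= j + LCE S i j - delta - 1 & d = p - j]).
Proof.
move=> _ _ _ HP /andP[hi hiS] /andP[hj _] hL d.
case: S HP hiS hL => [|x0 S'] HP hiS hL; first by rewrite /= in hiS; lia.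
set S := x0 :: S' in HP hiS hL *.
split.
- apply: (@dir T S P tau delta i j _ x0 HP hi hj _ hL) => k hk.
  exact: lce_prop.
- apply: (@dir T S P tau delta j i _ x0 HP hj hi _ hL) => k hk.
  have [a b c] := @lce_prop T S x0 i j k hi hj hk; by split.
Qed.
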